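(* Let $K,G:[0,\infty)\to\mathbb{R}$ be continuous, let $f$ solve $f''+Kf=0$ with $f>0$ on $(0,\infty)$ and $\int_1^\infty f(t)^{-2}dt<\infty$, and let $m$ solve $m''+Gm=0$ with $m(0)=f(0)$, $m'(0)=f'(0)$. Suppose the support of $G-K$ is contained in a bounded interval $[a,b]\subset[1,\infty)$. Then for all $t\ge 0$, $$|(m'f-mf')(t)|\le(\alpha(m)+1)\,\|G-K\|_2\,\|f^2|_{[a,b]}\|_2,$$ where $\|G-K\|_2:=\sqrt{\int_0^\infty|G-K|^2dt}$, $\|f^2|_{[a,b]}\|_2:=\sqrt{\int_a^b f(t)^4dt}$, $\sigma(t):=m(t)/f(t)-1$ for $t>0$, and $\alpha(m):=\sup_{t>0}|\sigma(t)|$. *)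

(* Defs.v *)
From Stdlib Require Import Reals.
Open Scope R_scope.

Definition improper_integral_converges (g : R -> R) (a : R) : Prop :=
  (forall x, a <= x -> exists _ : Riemann_integrable g a x, True) /\
  exists L : R, forall eps : R, 0 < eps -> exists M : R,
    forall (x : R) (pr : Riemann_integrable g a x),
      M <= x -> Rabs (RiemannInt pr - L) < eps.

(* Main.v *)
Require Import Defs.
From Stdlib Require Import Reals Lra Psatz.
Open Scope R_scope.



Lemma RI_nonneg (g : R -> R) a b (pr : Riemann_integrable g a b) :
  a <= b -> (forall x, a < x < b -> 0 <= g x) -> 0 <= RiemannInt pr.
Proof.
  intros Hab H.
  rewrite <- (Rmult_0_l (b - a)), <- (RiemannInt_P15 (RiemannInt_P14 a b 0)).
  apply RiemannInt_P19; auto.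
Qed.

Lemma RI_zero (g : R -> R) a b (pr : Riemann_integrable g a b) :
  a <= b -> (forall x, a < x < b -> g x = 0) -> RiemannInt pr = 0.
Proof.
  intros Hab H.
  rewrite <- (Rmult_0_l (b - a)), <- (RiemannInt_P15 (RiemannInt_P14 a b 0)).
  apply RiemannInt_P18; auto.
Qed.

Lemma real_cs (A B C : R) : 0 <= A -> 0 <= B ->
  (forall l, 0 < l -> 2 * l * C <= l ^ 2 * A + B) -> C <= sqrt A * sqrt B.
Proof.
  intros HA HB H.
  set (s := sqrt A). set (r := sqrt B).
  assert (Hs : 0 <= s) by apply sqrt_pos. assert (Hr : 0 <= r) by apply sqrt_pos.
  assert (HA' : A = s * s) by (symmetry; apply sqrt_sqrt; auto).
  assert (HB' : B = r * r) by (symmetry; apply sqrt_sqrt; auto).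
  assert (Heps : forall e, 0 < e -> C <= (r + e) * (s + e)).
  { intros e He.
    assert (Hl : 0 < (r + e) / (s + e)) by (apply Rdiv_lt_0_compat; lra).
    specialize (H _ Hl).
    assert (Hse : 0 < s + e) by lra.
    assert (H2 : 2 * ((r + e) / (s + e)) * C * (s+e)^2 <=
                 (((r + e) / (s + e)) ^ 2 * A + B) * (s+e)^2).
    { apply Rmult_le_compat_r; [nra | lra]. }
    replace (2 * ((r + e) / (s + e)) * C * (s+e)^2) with (2 * (r+e) * (s+e) * C) in H2
      by (field; lra).
    replace ((((r + e) / (s + e)) ^ 2 * A + B) * (s+e)^2) with
      ((r+e)^2 * A + B * (s+e)^2) in H2 by (field; lra).
    rewrite HA', HB' in H2.
    assert (H3a : (r+e)^2 * (s*s) <= (r+e)^2 * ((s+e)*(s+e))).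
    { apply Rmult_le_compat_l; [apply pow2_ge_0| nra]. }
    assert (H3b : r*r*(s+e)^2 <= ((r+e)*(r+e))*(s+e)^2).
    { apply Rmult_le_compat_r; [apply pow2_ge_0| nra]. }
    assert (H4 : 0 < (r+e)*(s+e)) by nra.
    nra. }
  destruct (Rle_or_lt C (r * s)) as [Hc|Hc]; [lra|].
  set (d := C - r * s).
  set (e := d / (r + s + 1 + d)).
  assert (Hd : 0 < d) by (unfold d; lra).
  assert (He1 : e * (r + s + 1 + d) = d) by (unfold e; field; lra).
  assert (He0 : 0 < e) by (unfold e; apply Rdiv_lt_0_compat; lra).
  assert (He2 : e < 1).
  { apply Rmult_lt_reg_r with (r + s + 1 + d); [lra|]. rewrite He1; lra. }
  specialize (Heps e He0).
  assert (e * e < e * 1) by (apply Rmult_lt_compat_l; lra).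
  assert (0 <= e * d) by nra.
  unfold d in *. nra.
Qed.

Lemma cs (u v : R -> R) a b
  (pA : Riemann_integrable (fun x => u x ^ 2) a b)
  (pB : Riemann_integrable (fun x => v x ^ 2) a b)
  (pC : Riemann_integrable (fun x => u x * v x) a b) :
  a <= b -> RiemannInt pC <= sqrt (RiemannInt pA) * sqrt (RiemannInt pB).
Proof.
  intros Hab. apply real_cs.
  - apply RI_nonneg; auto. intros; apply pow2_ge_0.
  - apply RI_nonneg; auto. intros; apply pow2_ge_0.
  - intros l Hl.
    pose proof (RiemannInt_P13 pB pA (RiemannInt_P10 (l^2) pB pA)) as E1.
    pose proof (RiemannInt_P13 (RiemannInt_P14 a b 0) pC
       (RiemannInt_P10 (2*l) (RiemannInt_P14 a b 0) pC)) as E2.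
    rewrite RiemannInt_P15 in E2.
    assert (Hle : RiemannInt (RiemannInt_P10 (2*l) (RiemannInt_P14 a b 0) pC)
        <= RiemannInt (RiemannInt_P10 (l^2) pB pA)).
    { apply RiemannInt_P19; auto. intros x _. unfold fct_cte.
      pose proof (pow2_ge_0 (l * u x - v x)). nra. }
    lra.
Qed.

Lemma mono F F' t : 0 < t -> (forall x, 0 <= x <= t -> derivable_pt_lim F x (F' x)) ->
  (forall x, 0 < x < t -> 0 <= F' x) -> F 0 <= F t.
Proof.
  intros Ht Hd Hp. destruct (MVT_cor2 F F' 0 t Ht Hd) as [c [Hc Hc']].
  specialize (Hp c Hc'). nra.
Qed.

Theorem lemma2p2
  (K G f f' f'' m m' m'' : R -> R) (a b : R)
  (HK : continuity K) (HG : continuity G)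
  (Hf1 : forall t, derivable_pt_lim f t (f' t))
  (Hf2 : forall t, derivable_pt_lim f' t (f'' t))
  (Hfeq : forall t, 0 <= t -> f'' t + K t * f t = 0)
  (Hfpos : forall t, 0 < t -> 0 < f t)
  (Hfint : improper_integral_converges (fun t => / (f t) ^ 2) 1)
  (Hm1 : forall t, derivable_pt_lim m t (m' t))
  (Hm2 : forall t, derivable_pt_lim m' t (m'' t))
  (Hmeq : forall t, 0 <= t -> m'' t + G t * m t = 0)
  (Hm0 : m 0 = f 0) (Hm'0 : m' 0 = f' 0)
  (Hab : 1 <= a <= b)
  (Hsupp : forall t, 0 <= t -> (t < a \/ b < t) -> G t - K t = 0)
  (alpha : R)
  (Halpha : is_lub (fun y => exists t, 0 < t /\ y = Rabs (m t / f t - 1)) alpha)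
  (prGK : Riemann_integrable (fun t => (Rabs (G t - K t)) ^ 2) 0 b)
  (prf : Riemann_integrable (fun t => (f t) ^ 4) a b) :
  forall t, 0 <= t ->
    Rabs (m' t * f t - m t * f' t)
      <= (alpha + 1) * sqrt (RiemannInt prGK) * sqrt (RiemannInt prf).
Proof.
  intros t ht.
  set (u := fun x => Rabs (G x - K x)).
  set (v := fun x => f x ^ 2).
  set (g := fun x => u x * v x).
  set (W := fun x => m' x * f x - m x * f' x).
  assert (Hal0 : 0 <= alpha).
  { destruct Halpha as [Hub _]. apply Rle_trans with (Rabs (m 1 / f 1 - 1)).
    - apply Rabs_pos.
    - apply Hub. exists 1; split; [lra | reflexivity]. }
  assert (Hfc : forall x, continuity_pt f x).
  { intro x. apply derivable_continuous_pt. exists (f' x). apply Hf1. }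
  assert (Huc : forall x, continuity_pt u x).
  { intro x. unfold u. apply (continuity_pt_comp (fun x => G x - K x) Rabs).
    - apply continuity_pt_minus; auto.
    - apply Rcontinuity_abs. }
  assert (Hvc : forall x, continuity_pt v x).
  { intro x. unfold v. simpl.
    apply (continuity_pt_mult f (fun x => f x * 1)); auto.
    apply (continuity_pt_mult f (fun _ => 1)); auto. apply continuity_pt_const.
    intros ? ?; auto. }
  assert (Hgc : forall x, continuity_pt g x).
  { intro x. apply (continuity_pt_mult u v); auto. }
  assert (RIg : forall x y, x <= y -> Riemann_integrable g x y).
  { intros x y Hxy. apply continuity_implies_RiemannInt; auto. }
  assert (Hg0 : forall x, 0 <= g x).
  { intro x. unfold g, u, v. apply Rmult_le_pos; [apply Rabs_pos | apply pow2_ge_0]. }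
  assert (HgK : forall x, 0 <= x -> (x < a \/ b < x) -> g x = 0).
  { intros x Hx Ho. unfold g, u. rewrite (Hsupp x Hx Ho), Rabs_R0. ring. }
  assert (Step1 : Rabs (W t) <= (alpha + 1) * RiemannInt (RIg 0 t ht)).
  { destruct ht as [htp | ht0].
    - set (P := primitive (Rlt_le _ _ htp) (FTC_P1 (Rlt_le _ _ htp) (fun x _ => Hgc x))).
      assert (HPd : forall x, 0 <= x <= t -> derivable_pt_lim P x (g x)).
      { intros x Hx. apply RiemannInt_P28; auto. }
      assert (HPI : RiemannInt (RIg 0 t (Rlt_le _ _ htp)) = P t - P 0).
      { apply RiemannInt_P20. }
      assert (HWd : forall x, derivable_pt_lim W x (m'' x * f x - m x * f'' x)).
      { intro x. unfold W.
        replace (m'' x * f x - m x * f'' x) with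
          ((m'' x * f x + m' x * f' x) - (m' x * f' x + m x * f'' x)) by ring.
        apply (derivable_pt_lim_minus (fun x => m' x * f x) (fun x => m x * f' x)).
        - apply (derivable_pt_lim_mult m' f); auto.
        - apply (derivable_pt_lim_mult m f'); auto. }
      assert (Hkey : forall x, 0 < x -> Rabs (m'' x * f x - m x * f'' x) <= (alpha + 1) * g x).
      { intros x Hx.
        replace (m'' x * f x - m x * f'' x) with ((K x - G x) * m x * f x).
        2:{ pose proof (Hfeq x (Rlt_le _ _ Hx)); pose proof (Hmeq x (Rlt_le _ _ Hx)).
            replace (m'' x) with (- (G x * m x)) by lra.
            replace (f'' x) with (- (K x * f x)) by lra. ring. }
        destruct (Rle_or_lt a x) as [Hax|Hax]; [destruct (Rle_or_lt x b) as [Hxb|Hxb]|].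
        - pose proof (Hfpos x Hx) as Hfx.
          assert (Hs : Rabs (m x / f x - 1) <= alpha).
          { destruct Halpha as [Hub _]. apply Hub. exists x; split; auto. }
          assert (Hm : Rabs (m x) <= (alpha + 1) * f x).
          { replace (m x) with (f x * (m x / f x - 1) + f x) by (field; lra).
            apply Rle_trans with (Rabs (f x * (m x / f x - 1)) + Rabs (f x)).
            apply Rabs_triang. rewrite Rabs_mult, (Rabs_right (f x)) by lra.
            nra. }
          rewrite !Rabs_mult, (Rabs_right (f x)) by lra.
          unfold g, u, v. rewrite <- Rabs_Ropp. replace (- (K x - G x)) with (G x - K x) by ring.
          assert (0 <= Rabs (G x - K x)) by apply Rabs_pos.
          replace ((alpha + 1) * (Rabs (G x - K x) * f x ^ 2)) with
            (Rabs (G x - K x) * ((alpha + 1) * f x) * f x) by ring.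
          apply Rmult_le_compat_r; [lra|]. apply Rmult_le_compat_l; auto.
        - replace (K x - G x) with (- (G x - K x)) by ring.
          rewrite (Hsupp x (Rlt_le _ _ Hx)) by auto.
          rewrite Ropp_0, !Rmult_0_l, Rabs_R0. apply Rmult_le_pos; auto; lra.
        - replace (K x - G x) with (- (G x - K x)) by ring.
          rewrite (Hsupp x (Rlt_le _ _ Hx)) by auto.
          rewrite Ropp_0, !Rmult_0_l, Rabs_R0. apply Rmult_le_pos; auto; lra. }
      assert (Hside : forall e, Rabs e = 1 -> e * (W t - W 0) <= (alpha + 1) * (P t - P 0)).
      { intros e He.
        assert (Hmv : ((alpha+1) * P 0 - e * W 0) <= ((alpha+1) * P t - e * W t)).
        { apply (mono (fun x => (alpha+1) * P x - e * W x)
            (fun x => (alpha+1) * g x - e * (m'' x * f x - m x * f'' x))); auto.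
          - intros x Hx. apply (derivable_pt_lim_minus (fun x => (alpha+1) * P x) (fun x => e * W x)).
            + apply (derivable_pt_lim_scal P (alpha+1)); auto.
            + apply (derivable_pt_lim_scal W e); auto.
          - intros x Hx. specialize (Hkey x (proj1 Hx)).
            assert (e * (m'' x * f x - m x * f'' x) <= Rabs (e * (m'' x * f x - m x * f'' x)))
              by apply RRle_abs.
            rewrite Rabs_mult, He, Rmult_1_l in H. lra. }
        lra. }
      assert (HW0 : W 0 = 0) by (unfold W; rewrite Hm0, Hm'0; ring).
      rewrite HW0, Rminus_0_r in Hside.
      rewrite (RiemannInt_P5 (RIg 0 t (or_introl htp)) (RIg 0 t (Rlt_le _ _ htp))), HPI.
      apply Rabs_le. split.
      + assert (Habs : Rabs (-1) = 1) by (rewrite Rabs_left; lra). pose proof (Hside (-1) Habs). lra.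
      + pose proof (Hside 1). rewrite Rabs_R1 in H. specialize (H eq_refl). lra.
    - subst t. unfold W. rewrite Hm0, Hm'0.
      replace (f' 0 * f 0 - f 0 * f' 0) with 0 by ring. rewrite Rabs_R0.
      apply Rmult_le_pos; [lra|]. apply RI_nonneg; [lra|]. intros; auto. }
  assert (Hsq : forall h, (forall x, continuity_pt h x) -> forall x y, x <= y ->
     Riemann_integrable (fun z => h z ^ 2) x y).
  { intros h Hh x y Hxy. apply continuity_implies_RiemannInt; auto. intros z _.
    simpl. apply (continuity_pt_mult h (fun z => h z * 1)); auto.
    apply (continuity_pt_mult h (fun _ => 1)); auto. apply continuity_pt_const. intros ? ?; auto. }
  set (T := Rmax t b).
  assert (HtT : t <= T) by apply Rmax_l.
  assert (HbT : b <= T) by apply Rmax_r.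
  assert (E1 := RiemannInt_P26 (RIg 0 t ht) (RIg t T HtT) (RIg 0 T (Rle_trans _ _ _ ht HtT))).
  assert (N1 : 0 <= RiemannInt (RIg t T HtT)) by (apply RI_nonneg; auto).
  assert (Ha0 : 0 <= a) by lra.
  assert (E2 := RiemannInt_P26 (RIg 0 a Ha0) (RIg a T (Rle_trans _ _ _ (proj2 Hab) HbT))
      (RIg 0 T (Rle_trans _ _ _ ht HtT))).
  assert (Z1 : RiemannInt (RIg 0 a Ha0) = 0).
  { apply RI_zero; auto. intros x Hx. apply HgK; lra. }
  assert (E3 := RiemannInt_P26 (RIg a b (proj2 Hab)) (RIg b T HbT)
      (RIg a T (Rle_trans _ _ _ (proj2 Hab) HbT))).
  assert (Z2 : RiemannInt (RIg b T HbT) = 0).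
  { apply RI_zero; auto. intros x Hx. apply HgK; lra. }
  assert (CS := cs u v a b (Hsq u Huc a b (proj2 Hab)) (Hsq v Hvc a b (proj2 Hab))
      (RIg a b (proj2 Hab)) (proj2 Hab)).
  assert (EB : RiemannInt (Hsq v Hvc a b (proj2 Hab)) = RiemannInt prf).
  { apply RiemannInt_P18; [lra|]. intros x _. cbv beta. unfold v. rewrite <- pow_mult. reflexivity. }
  assert (EA : RiemannInt (Hsq u Huc 0 a Ha0) + RiemannInt (Hsq u Huc a b (proj2 Hab)) = RiemannInt prGK)
    by exact (RiemannInt_P26 (Hsq u Huc 0 a Ha0) (Hsq u Huc a b (proj2 Hab)) prGK).
  assert (NA : 0 <= RiemannInt (Hsq u Huc 0 a Ha0)).
  { apply RI_nonneg; auto. intros; apply pow2_ge_0. }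
  assert (SA : sqrt (RiemannInt (Hsq u Huc a b (proj2 Hab))) <= sqrt (RiemannInt prGK)).
  { apply sqrt_le_1_alt. lra. }
  rewrite EB in CS.
  assert (0 <= sqrt (RiemannInt prf)) by apply sqrt_pos.
  assert (Hint : RiemannInt (RIg 0 t ht) <= sqrt (RiemannInt prGK) * sqrt (RiemannInt prf)).
  { apply Rle_trans with (sqrt (RiemannInt (Hsq u Huc a b (proj2 Hab))) * sqrt (RiemannInt prf)).
    - apply Rle_trans with (RiemannInt (RIg a b (proj2 Hab))); [lra | exact CS].
    - apply Rmult_le_compat_r; auto. }
  rewrite Rmult_assoc. apply Rle_trans with (1 := Step1).
  apply Rmult_le_compat_l; lra.
Qed.
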